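(* Consider an undiscounted ($\gamma=1$) MDP with finite state set $\mathcal{S}$, deterministic transitions $\delta:\{(s,a): s\in\mathcal{S}\setminus\mathcal{T}, a\in\mathbb{A}(s)\}\to\mathcal{S}$, a nonempty set $\mathcal{T}\subseteq\mathcal{S}$ of absorbing terminal states, and rewards $R(s,a)$. Assume every non-terminal state $s$ has a finite action set with $|\mathbb{A}(s)|\ge 2$, that from every state some terminal state is reachable, and that $\max_{s,a} R(s,a) < -\tau$ for a given $\tau>0$. For non-terminal $s$ let $\tau_s = \tau/\log|\mathbb{A}(s)|$ (the decoupled entropy temperature). Then the decoupled entropy-regularized Bellman equation $$V(s) = \tau_s \log \sum_{a\in\mathbb{A}(s)} \exp\!\Big(\frac{R(s,a) + V(\delta(s,a))}{\tau_s}\Big)\quad (s\notin\mathcal{T}),\qquad V(s)=0\quad (s\in\mathcal{T}),$$ has a real-valued (finite) solution $V:\mathcal{S}\to\mathbb{R}$.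
   Context: This is the maximum-entropy (soft) Bellman equation in which the entropy regularizer at each state is divided by its range $\log|\mathbb{A}(s)|$, i.e. the temperature at state $s$ is $\tau/\log|\mathbb{A}(s)|$; $\mathbb{A}(s)$ denotes the set of actions available at state $s$. *)

(* Defs.v *)
From HB Require Import structures.
From mathcomp Require Import all_boot all_order all_algebra.
From mathcomp Require Import all_classical all_reals all_analysis.
Set Implicit Arguments. Unset Strict Implicit. Unset Printing Implicit Defensive.
Import Order.TTheory GRing.Theory Num.Theory.
Local Open Scope ring_scope.

Definition mdp_step (S Act : finType) (T : {set S}) (Aset : S -> {set Act})
  (delta : S -> Act -> S) : rel S :=
  fun s s' => (s \notin T) && [exists a in Aset s, delta s a == s'].

Definition terminal_reachable (S Act : finType) (T : {set S})
  (Aset : S -> {set Act}) (delta : S -> Act -> S) : Prop :=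
  forall s : S, exists2 t, t \in T & connect (mdp_step T Aset delta) s t.

Definition dtemp (R : realType) (Act : finType) (tau : R) (A : {set Act}) : R :=
  tau / ln (#|A|%:R).

(* Main.v *)
Require Import Defs.
From HB Require Import structures.
From mathcomp Require Import all_boot all_order all_algebra.
From mathcomp Require Import all_classical all_reals all_analysis.
Import Order.TTheory GRing.Theory Num.Theory.
Local Open Scope ring_scope.
From mathcomp Require Import lra.
Set Implicit Arguments. Unset Strict Implicit.
Section SM.
Variables (R : realType) (Act : finType).

Lemma sum_exp_gt0 (A : {set Act}) (x : Act -> R) a0 : a0 \in A ->
  0 < \sum_(a in A) expR (x a).
Proof.
move=> Ha; rewrite (bigD1 a0) //=; apply: ltr_wpDr; last exact: expR_gt0.
by apply: sumr_ge0 => i _; exact: expR_ge0.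
Qed.

Lemma softmax_ge (A : {set Act}) (c : R) (x : Act -> R) a0 : 0 < c -> a0 \in A ->
  x a0 <= c * ln (\sum_(a in A) expR (x a / c)).
Proof.
move=> c0 Ha.
have -> : x a0 = c * ln (expR (x a0 / c)) by rewrite expRK mulrCA divff ?mulr1 // gt_eqF.
rewrite ler_pM2l // ler_ln ?posrE ?expR_gt0 //; last exact: sum_exp_gt0 Ha.
rewrite (bigD1 a0) //= lerDl; apply: sumr_ge0 => i _; exact: expR_ge0.
Qed.

Lemma softmax_mono (A : {set Act}) (c : R) (x y : Act -> R) a0 : 0 < c -> a0 \in A ->
  (forall a, a \in A -> x a <= y a) ->
  c * ln (\sum_(a in A) expR (x a / c)) <= c * ln (\sum_(a in A) expR (y a / c)).
Proof.
move=> c0 Ha H.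
rewrite ler_pM2l // ler_ln ?posrE; try exact: sum_exp_gt0 Ha.
apply: ler_sum => a aA; rewrite ler_expR ler_pM2r ?invr_gt0 //; exact: H.
Qed.

Lemma softmax_le (A : {set Act}) (c tau m : R) (x : Act -> R) a0 : 0 < c -> a0 \in A ->
  c * ln (#|A|%:R) = tau -> (forall a, a \in A -> x a <= m) ->
  c * ln (\sum_(a in A) expR (x a / c)) <= m + tau.
Proof.
move=> c0 Ha Htau H.
have Apos : (0 : R) < #|A|%:R by rewrite ltr0n; apply/card_gt0P; exists a0.
apply: (@le_trans _ _ (c * ln (#|A|%:R * expR (m / c)))).
  rewrite ler_pM2l // ler_ln ?posrE ?mulr_gt0 ?expR_gt0 //; last exact: sum_exp_gt0 Ha.
  apply: (@le_trans _ _ (\sum_(a in A) expR (m / c))).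
    apply: ler_sum => a aA; rewrite ler_expR ler_pM2r ?invr_gt0 //; exact: H.
  by rewrite sumr_const mulr_natl.
by rewrite lnM ?posrE ?expR_gt0 // expRK mulrDr Htau mulrCA divff ?mulr1 ?gt_eqF // addrC.
Qed.
End SM.
Lemma rank_exists (S Act : finType) (T : {set S})
  (Aset : S -> {set Act}) (delta : S -> Act -> S) :
  terminal_reachable T Aset delta ->
  exists k : S -> nat, (forall s, s \in T -> k s = 0%N) /\
    (forall s, s \notin T -> exists2 a, a \in Aset s & (k (delta s a) < k s)%N).
Proof.
move=> Hr.
set e := mdp_step T Aset delta.
pose P s n := `[< exists p, [&& path e s p, last s p \in T & size p == n] >].
have exP : forall s, exists n, P s n.
  move=> s; have [t tT /connectP [p pp dt]] := Hr s.
  by exists (size p); apply/asboolP; exists p; rewrite pp -dt tT eqxx.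
exists (fun s => ex_minn (exP s)); split.
  move=> s sT; case: ex_minnP => n _ /(_ 0%N); rewrite leqn0 => H; apply/eqP/H.
  by apply/asboolP; exists [::]; rewrite /= sT.
move=> s sT; case: ex_minnP => n /asboolP [[|s' p] /and3P [pp lT /eqP sz]] _.
  by move: lT; rewrite /= (negbTE sT).
move: pp => /= /andP [/andP [_ /exists_inP [a aA /eqP da]] pp].
exists a => //; rewrite da.
case: ex_minnP => m _ /(_ (size p)) H; rewrite -sz /=; apply: H.
by apply/asboolP; exists p; rewrite pp lT eqxx.
Qed.

Local Open Scope classical_set_scope.
Local Open Scope ring_scope.

Theorem proposition1 (R : realType) (S Act : finType) (T : {set S})
  (Aset : S -> {set Act}) (delta : S -> Act -> S) (rew : S -> Act -> R)
  (tau : R) :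
  0 < tau ->
  (exists t : S, t \in T) ->
  (forall s, s \notin T -> (2 <= #|Aset s|)%N) ->
  terminal_reachable T Aset delta ->
  (forall s, s \notin T -> forall a, a \in Aset s -> rew s a < - tau) ->
  exists V : S -> R,
    (forall s, s \in T -> V s = 0) /\
    (forall s, s \notin T ->
       V s = dtemp tau (Aset s) *
             ln (\sum_(a in Aset s)
                   expR ((rew s a + V (delta s a)) / dtemp tau (Aset s)))).
Proof.
move=> tau0 _ HA Hr Hrew.
have [k [k0 kdec]] := rank_exists Hr.
have a0P : forall s, s \notin T -> exists a0, a0 \in Aset s.
  by move=> s sT; apply/card_gt0P; apply: leq_trans (HA s sT).
have cpos : forall s, s \notin T -> 0 < dtemp tau (Aset s).
  move=> s sT; rewrite /dtemp divr_gt0 // ln_gt0 // ltr1n; exact: HA.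
have ctau : forall s, s \notin T -> dtemp tau (Aset s) * ln (#|Aset s|%:R) = tau.
  move=> s sT; rewrite /dtemp mulrAC -mulrA divff ?mulr1 // gt_eqF // ln_gt0 // ltr1n.
  exact: HA.
pose M := \sum_s \sum_a `|rew s a|.
have M0 : 0 <= M by apply: sumr_ge0 => s _; apply: sumr_ge0 => a _.
have Mr : forall s a, - rew s a <= M.
  move=> s a; apply: (@le_trans _ _ `|rew s a|); first by rewrite -normrN ler_norm.
  rewrite /M (bigD1 s) //= (bigD1 a) //= -addrA lerDl addr_ge0 //.
    by apply: sumr_ge0.
  by apply: sumr_ge0 => i _; apply: sumr_ge0.
pose W s := - (M * (k s)%:R).
pose B (V : S -> R) s := if s \in T then 0 else dtemp tau (Aset s) *
             ln (\sum_(a in Aset s)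
                   expR ((rew s a + V (delta s a)) / dtemp tau (Aset s))).
have Bmono : forall V U, (forall s, V s <= U s) -> forall s, B V s <= B U s.
  move=> V U H s; rewrite /B; case: ifP => // /negbT sT.
  have [a0 Ha0] := a0P s sT.
  by apply: (softmax_mono (cpos s sT) Ha0) => a _; rewrite lerD2l.
have Ble0 : forall V, (forall s, V s <= 0) -> forall s, B V s <= 0.
  move=> V H s; rewrite /B; case: ifP => // /negbT sT.
  have [a0 Ha0] := a0P s sT.
  rewrite -[X in _ <= X](addNr tau); apply: (softmax_le (cpos s sT) Ha0 (ctau s sT)) => a aA.
  have := Hrew s sT a aA; have := H (delta s a); lra.
pose Pset (V : S -> R) := (forall s, W s <= V s) /\ (forall s, V s <= 0) /\
   (forall s, V s <= B V s).
have PW : Pset W.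
  split=> //; split.
    by move=> s; rewrite /W oppr_le0 mulr_ge0.
  move=> s; rewrite /B; case: ifP => [sT|/negbT sT].
    by rewrite /W oppr_le0 mulr_ge0.
  have [a aA klt] := kdec s sT.
  apply: (le_trans _ (softmax_ge _ (cpos s sT) aA)).
  rewrite /W.
  have : ((k (delta s a))%:R + 1 <= (k s)%:R :> R) by rewrite natr1 ler_nat.
  move=> hk; have := Mr s a.
  have : M * ((k (delta s a))%:R + 1) <= M * (k s)%:R by rewrite ler_wpM2l.
  lra.
pose E s := [set x : R | exists V, Pset V /\ x = V s].
have Eub : forall s, ubound (E s) 0 by move=> s x [V [[_ [H _]] ->]].
have Ene : forall s, E s !=set0 by move=> s; exists (W s); exists W.
pose Vs s := sup (E s).
have le_sup : forall V, Pset V -> forall s, V s <= Vs s.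
  by move=> V PV s; apply: (ub_le_sup (ex_intro _ 0 (Eub s))); exists V.
have sup_le : forall s y, (forall V, Pset V -> V s <= y) -> Vs s <= y.
  by move=> s y H; apply: ge_sup => // x [V [PV ->]]; apply: H.
have Vs_le0 : forall s, Vs s <= 0 by move=> s; apply: sup_le => V [_ []].
have VsB : forall s, Vs s <= B Vs s.
  move=> s; apply: sup_le => V PV; have [_ [_ H]] := PV.
  by apply: (le_trans (H s)); apply: Bmono; apply: le_sup.
have PB : Pset (B Vs).
  split; first by move=> s; apply: (le_trans (le_sup _ PW s)).
  split; first exact: Ble0.
  by apply: Bmono.
have fix_ : forall s, Vs s = B Vs s.
  by move=> s; apply/eqP; rewrite eq_le VsB le_sup.
exists Vs; split.
  by move=> s sT; rewrite fix_ /B sT.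
by move=> s sT; rewrite {1}fix_ /B (negbTE sT).
Qed.
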